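(* Fix $\tau>0$, and assume that for every $\lambda\in\Lambda$ the problem $\max_{\pi\in\Pi}\mathcal L_\tau(\pi,\lambda)$ has exactly one maximizer $\pi^*_{\tau,\lambda}$. Assume the CMDP has an optimal policy $\pi^*$ with optimal value $V_0^*(\rho)=V_0^{\pi^*}(\rho)$. Let $\lambda\in\Lambda$. Then $$V_0^*(\rho)-V_0^{\pi^*_{\tau,\lambda}}(\rho)\le\langle\lambda,\nabla d_\tau(\lambda)\rangle+\tau\mathcal H(\pi^*_{\tau,\lambda}),$$ $$\bigl\|[c-V^{\pi^*_{\tau,\lambda}}(\rho)]_+\bigr\|_2=\bigl\|[-\nabla d_\tau(\lambda)]_+\bigr\|_2.$$
   Context: Finite MDP with state space $\mathcal S$, action space $\mathcal A$, transition kernel $\mathrm P$, discount $\gamma\in(0,1)$, initial distribution $\rho$, positive finite rewards $r_0,\dots,r_m$, $r_{0,\max}=\max_{s,a}r_0(s,a)$. $\Pi$ = stationary policies. $V_i^\pi(\rho)=\mathbb{E}[\sum_{t\ge0}\gamma^tr_i(s_t,a_t)]$ with $s_0\sim\rho$, $a_t\sim\pi(\cdot\mid s_t)$, $s_{t+1}\sim\mathrm P(\cdot\mid s_t,a_t)$; $V^\pi(\rho)=(V_1^\pi(\rho),\dots,V_m^\pi(\rho))^\top$; thresholds $c\in\mathbb{R}^m$. The CMDP is $\max_{\pi\in\Pi}V_0^\pi(\rho)$ s.t. $V_i^\pi(\rho)\ge c_i$, $i=1,\dots,m$. Discounted entropy $\mathcal H(\pi)=-\mathbb{E}[\sum_t\gamma^t\log\pi(a_t\mid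 s_t)]$. $\mathcal L_\tau(\pi,\lambda)=V_0^\pi(\rho)+\langle\lambda,V^\pi(\rho)-c\rangle+\tau\mathcal H(\pi)$, $d_\tau(\lambda)=\max_{\pi\in\Pi}\mathcal L_\tau(\pi,\lambda)$ (which is differentiable on $\Lambda$ under the uniqueness hypothesis). $[x]_+$ is the componentwise positive part. For a Slater constant $\xi>0$ (i.e. some $\pi_\xi$ has $V_i^{\pi_\xi}(\rho)\ge c_i+\xi$ for all $i$), $B_\lambda=\frac{r_{0,\max}+\log|\mathcal A|}{(1-\gamma)\xi}$ and $\Lambda=\{\lambda\in\mathbb{R}^m_+:\|\lambda\|_1\le B_\lambda\}$. *)

(* Defs.v *)
From HB Require Import structures.
From mathcomp Require Import all_boot all_order all_algebra.
From mathcomp Require Import all_classical all_reals all_analysis.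
Set Implicit Arguments.
Unset Strict Implicit.
Unset Printing Implicit Defensive.
Import Order.TTheory GRing.Theory Num.Theory.
Import numFieldNormedType.Exports.
Local Open Scope classical_set_scope.
Local Open Scope ring_scope.

Section CMDP.
Variables (R : realType) (S A : finType).

(* A stationary (randomized) policy pi(a|s) := pi s a. *)
Definition is_policy (pi : S -> A -> R) : Prop :=
  forall s, (forall a, 0 <= pi s a) /\ \sum_a pi s a = 1.

Definition is_distr (rho : S -> R) : Prop :=
  (forall s, 0 <= rho s) /\ \sum_s rho s = 1.

(* A transition kernel P(s'|s,a) := P s a s'. *)
Definition is_kernel (P : S -> A -> S -> R) : Prop :=
  forall s a, is_distr (P s a).

Fixpoint state_law (P : S -> A -> S -> R) (pi : S -> A -> R) (rho : S -> R)
    (t : nat) : S -> R :=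
  match t with
  | O => rho
  | t'.+1 => fun s' =>
      \sum_s \sum_a state_law P pi rho t' s * pi s a * P s a s'
  end.

(* E[ sum_t gamma^t f(s_t, a_t) ] (written by linearity of expectation). *)
Definition disc_sum (P : S -> A -> S -> R) (gamma : R) (rho : S -> R)
    (pi : S -> A -> R) (f : S -> A -> R) : R :=
  limn (series (fun t : nat =>
     gamma ^+ t * \sum_s \sum_a state_law P pi rho t s * pi s a * f s a)).

Definition value P gamma rho pi (r : S -> A -> R) : R :=
  disc_sum P gamma rho pi r.

(* Discounted entropy H(pi) = - E[ sum_t gamma^t log pi(a_t|s_t) ]
   (with ln 0 = 0, so the convention 0 log 0 = 0 holds). *)
Definition entropy P gamma rho (pi : S -> A -> R) : R :=
  disc_sum P gamma rho pi (fun s a => - ln (pi s a)).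

Definition lagr P gamma rho (r0 : S -> A -> R) m (r : 'I_m -> S -> A -> R)
    (c : 'rV[R]_m) (tau : R) (pi : S -> A -> R) (lam : 'rV[R]_m) : R :=
  value P gamma rho pi r0
  + \sum_(i < m) lam 0 i * (value P gamma rho pi (r i) - c 0 i)
  + tau * entropy P gamma rho pi.

Definition dual P gamma rho r0 m r c tau (lam : 'rV[R]_m) : R :=
  sup [set lagr P gamma rho r0 r c tau pi lam | pi in is_policy].

End CMDP.

Definition grad (R : realType) m (f : 'rV[R]_m -> R) (x : 'rV[R]_m)
  : 'rV[R]_m := \row_i ('D_(delta_mx 0 i) f x).

Definition pos_part (R : realType) (x : R) : R := Num.max x 0.

Definition norm2 (R : realType) m (v : 'rV[R]_m) : R :=
  Num.sqrt (\sum_(i < m) v 0 i ^+ 2).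

(* Main.v *)
Require Import Defs.
From HB Require Import structures.
From mathcomp Require Import all_boot all_order all_algebra.
From mathcomp Require Import all_classical all_reals all_analysis.
From mathcomp Require Import ring lra.
Import Order.TTheory GRing.Theory Num.Theory.
Import numFieldNormedType.Exports.
Local Open Scope classical_set_scope.
Local Open Scope ring_scope.
Set Implicit Arguments.
Unset Strict Implicit.
Section Ser.
Variables (R : realType) (gamma M : R).
Hypothesis (g0 : 0 <= gamma) (g1 : gamma < 1) (M0 : 0 <= M).

Lemma geom_part (n k : nat) : (n <= k)%N ->
  (1 - gamma) * \sum_(n <= j < k) gamma ^+ j = gamma ^+ n - gamma ^+ k.
Proof.
elim: k => [|k IH]; first by rewrite leqn0 => /eqP ->; rewrite big_geq // mulr0 subrr.
rewrite leq_eqVlt => /orP [/eqP ->|]; first by rewrite big_geq // mulr0 subrr.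
rewrite ltnS => /[dup] nk /IH {}IH.
by rewrite big_nat_recr //= mulrDr IH exprSr; ring.
Qed.

Lemma geom_part_le (n k : nat) :
  \sum_(n <= j < k) gamma ^+ j <= gamma ^+ n / (1 - gamma).
Proof.
have g1' : 0 < 1 - gamma by rewrite subr_gt0.
case: (leqP n k) => nk; last first.
  by rewrite big_geq ?(ltnW nk) // divr_ge0 ?exprn_ge0 // ltW.
rewrite ler_pdivlMr // mulrC geom_part // lerBlDr lerDl exprn_ge0 //.
Qed.

Variable v : nat -> R.
Hypothesis vb : forall t, `|v t| <= M * gamma ^+ t.

Lemma ser_cvg : cvgn (series v).
Proof.
apply: normed_cvg.
have -> : [normed series v] = series (fun t => `|v t|).
  by apply/funext => n /=.
apply: (@series_le_cvg _ _ (geometric M gamma)) => //.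
- by move=> n; rewrite /geometric /= mulr_ge0 // exprn_ge0.
- by apply: is_cvg_geometric_series; rewrite ger0_norm.
Qed.

Lemma ser_tail (n : nat) :
  `|limn (series v) - series v n| <= M * gamma ^+ n / (1 - gamma).
Proof.
have H : (fun k => `|series v k - series v n|) @ \oo --> `|limn (series v) - series v n|.
  by apply: cvg_norm; apply: cvgB; [exact: ser_cvg | exact: cvg_cst].
apply: (cvgr_to_le H); near=> k.
have nk : (n <= k)%N by near: k; exists n.
rewrite sub_series_geq //.
apply: le_trans; first exact: ler_norm_sum.
apply: le_trans; first by apply: ler_sum => j _; exact: vb.
rewrite -mulr_sumr -mulrA ler_wpM2l //; exact: geom_part_le.
Unshelve. all: by end_near.
Qed.

Lemma ser_bound : `|limn (series v)| <= M / (1 - gamma).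
Proof.
have := ser_tail 0; rewrite expr0 mulr1.
suff -> : series v 0 = 0 by rewrite subr0.
by rewrite /series /= big_geq.
Qed.
End Ser.

Lemma sum_cont (R : realType) (T : topologicalType) (I : Type) (l : seq I) (F : I -> T -> R) :
  (forall i, continuous (F i)) -> continuous (fun x => \sum_(i <- l) F i x).
Proof.
move=> H; elim: l => [|i l IH].
  under eq_fun do rewrite big_nil. move=> x; exact: cvg_cst.
under eq_fun do rewrite big_cons. move=> x; apply: continuousD; [exact: H|exact: IH].
Qed.

Lemma lim_cont (R : realType) (gamma M : R) (T : topologicalType) (K : set T)
  (u : nat -> T -> R) :
  0 <= gamma -> gamma < 1 -> 0 <= M ->
  (forall t, continuous (u t)) ->
  (forall x, K x -> forall t, `|u t x| <= M * gamma ^+ t) ->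
  {within K, continuous (fun x => limn (series (fun t => u t x)))}.
Proof.
move=> g0 g1 M0 uc ub.
apply/subspace_continuousP => x Kx.
apply/cvgrPdist_le => e e0.
have g1' : 0 < 1 - gamma by rewrite subr_gt0.
have H0 : (fun N => M * gamma ^+ N / (1 - gamma)) @ \oo --> (0:R).
  have Hg : (GRing.exp gamma : R^nat) @ \oo --> 0 by apply: cvg_expr; rewrite ger0_norm.
  have := cvgMr_tmp (b := (1 - gamma)^-1) (cvgMl_tmp (a := M) Hg).
  by rewrite mulr0 mul0r; apply.
have e3 : 0 < e / 3 by rewrite divr_gt0.
have [N _ HN] := (cvgrPdist_le _ _).1 H0 _ e3.
have HNN := HN N (leqnn N); rewrite /= sub0r normrN ger0_norm in HNN; last first.
  by rewrite divr_ge0 ?mulr_ge0 ?exprn_ge0 // ltW.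
have Sc : continuous (fun y => series (fun t => u t y) N).
  rewrite /series /=; exact: (@sum_cont R T nat (index_iota 0 N) u uc).
have := Sc x; move/cvgrPdist_le/(_ _ e3) => Hn.
near=> y.
have Ky : K y by near: y; exact: withinT.
have Ty := @ser_tail R gamma M g0 g1 M0 _ (ub y Ky) N.
have Tx := @ser_tail R gamma M g0 g1 M0 _ (ub x Kx) N.
have Hy : `|series (fun t => u t x) N - series (fun t => u t y) N| <= e / 3.
  by near: y; apply: (@cvg_within _ (nbhs x) _ K); exact: Hn.
set Lx := limn _ in Tx *; set Ly := limn _ in Ty *.
set Sx := series _ N in Tx Hy *; set Sy := series _ N in Ty Hy *.
have -> : Lx - Ly = (Lx - Sx) + (Sx - Sy) - (Ly - Sy) by ring.
apply: le_trans; first exact: ler_normB.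
apply: le_trans; first (apply: lerD; first exact: ler_normD).
  exact: lexx.
have -> : e = e / 3 + e / 3 + e / 3 by field.
apply: lerD; last exact: le_trans Ty HNN.
apply: lerD; [exact: le_trans Tx HNN | exact: Hy].
Unshelve. all: by end_near.
Qed.
Section XLNX.
Variable R : realType.

Lemma xlnx_bound (x : R) : 0 <= x <= 1 -> 0 <= x * - ln x <= 1.
Proof.
case/andP => x0 x1.
rewrite mulr_ge0 ?oppr_ge0 ?ln_le0 //=.
case: (eqVneq x 0) => [->|xn0]; first by rewrite mul0r.
have xp : 0 < x by rewrite lt_neqAle eq_sym xn0.
rewrite -lnV ?posrE //.
have xi : 0 < x^-1 by rewrite invr_gt0.
have H := ln_sublinear xi.
rewrite -(mulfV xn0) ler_pM2l // ltW //.
Qed.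

Lemma xlnx_small (y c : R) : 0 < y -> 0 < c -> y * - ln y <= c + y * `|ln c|.
Proof.
move=> y0 c0.
have H := ln_sublinear (divr_gt0 c0 y0).
rewrite ln_div ?posrE // in H.
have H2 : - ln y <= c / y + `|ln c|.
  have : - ln y < c / y - ln c by lra.
  move/ltW/le_trans; apply; rewrite lerD2l; by rewrite -normrN ler_norm.
have := ler_wpM2l (ltW y0) H2; rewrite mulrDr mulrCA mulfV ?gt_eqF // mulr1; apply.
Qed.

Lemma xlnx_cont : continuous (fun x : R => x * ln x).
Proof.
move=> x; case: (ltgtP x 0) => [xlt|xgt|->].
- apply/cvgrPdist_le => e e0; near=> y.
  have : `|x - y| < - x.
    near: y; apply: (@cvgr_dist_lt _ _ _ _ _ id); [exact: cvg_id | by rewrite oppr_gt0].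
  move=> H.
  have yneg : y < 0.
    move: H; rewrite ltr_norml => /andP [H1 _]; lra.
  by rewrite (ln0 (ltW xlt)) (ln0 (ltW yneg)) !mulr0 subrr normr0 ltW.
- apply: continuousM; first exact: cvg_id.
  exact: continuous_ln.
- apply/cvgrPdist_le => e e0.
  set c := e / 2.
  have c0 : 0 < c by rewrite divr_gt0.
  set d := Num.min 1 (c / (`|ln c| + 1)).
  have d0 : 0 < d by rewrite lt_min ltr01 divr_gt0 // ltr_wpDl.
  near=> y.
  have Hy : `|0 - y| < d by near: y; apply: (@cvgr_dist_lt _ _ _ _ _ id); [exact: cvg_id|].
  rewrite mul0r sub0r normrN.
  case: (leP y 0) => y0; first by rewrite ln0 // mulr0 normr0 ltW.
  move: Hy; rewrite sub0r normrN gtr0_norm // lt_min => /andP [y1 yd].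
  rewrite ler0_norm; last by apply: mulr_ge0_le0; [exact: ltW | apply: ln_le0; exact: ltW].
  rewrite -mulrN.
  have Hs := @xlnx_small y c y0 c0.
  apply: (le_trans Hs).
  have : y * `|ln c| <= c.
    move: yd; rewrite ltr_pdivlMr ?ltr_wpDl // mulrDr mulr1 => H; lra.
  rewrite /c; lra.
Unshelve. all: by end_near.
Qed.
End XLNX.
Section Topo.
Variables (R : realType) (S A : finType).
Definition PX := {ptws S -> {ptws A -> R}}.
Lemma eval_cont s a : continuous (fun p : PX => p s a).
Proof.
move=> p.
apply: (@continuous_comp PX {ptws A -> R} R (fun p => p s) (fun q => q a)).
  exact: (@proj_continuous S (fun _ => {ptws A -> R}) s).
exact: (@proj_continuous A (fun _ => R) a).
Qed.


Lemma contD (T : topologicalType) (f g : T -> R) : continuous f -> continuous g -> continuous (fun x => f x + g x).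
Proof. by move=> Hf Hg x; exact: (@continuousD _ _ _ f g x (Hf x) (Hg x)). Qed.
Lemma contB (T : topologicalType) (f g : T -> R) : continuous f -> continuous g -> continuous (fun x => f x - g x).
Proof. by move=> Hf Hg x; exact: (@continuousB _ _ _ f g x (Hf x) (Hg x)). Qed.
Lemma contM (T : topologicalType) (f g : T -> R) : continuous f -> continuous g -> continuous (fun x => f x * g x).
Proof. by move=> Hf Hg x; exact: (continuousM (Hf x) (Hg x)). Qed.
Lemma contN (T : topologicalType) (f : T -> R) : continuous f -> continuous (fun x => - f x).
Proof. by move=> Hf x; exact: (@continuousN _ _ _ f x (Hf x)). Qed.
Lemma cont_cst (T : topologicalType) (c : R) : continuous (fun _ : T => c).
Proof. by move=> x; apply: cvg_cst. Qed.
Lemma cont_comp (T U : topologicalType) (f : T -> U) (g : U -> R) : continuous f -> continuous g -> continuous (fun x => g (f x)).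
Proof. by move=> Hf Hg x; exact: (continuous_comp (Hf x) (Hg (f x))). Qed.

Definition Pol : set PX := [set p | is_policy p].

Lemma pol_le1 (p : S -> A -> R) s a : is_policy p -> 0 <= p s a <= 1.
Proof.
move=> /(_ s) [H0 H1]; rewrite H0 /= -H1 (bigD1 a) //= lerDl sumr_ge0 //.
Qed.

Lemma compact_box : compact [set p : PX | forall s a, (`[0, 1]%classic : set R) (p s a)].
Proof.
have := @tychonoff S (fun _ => {ptws A -> R})
  (fun _ => [set q : {ptws A -> R} | forall a, (`[0, 1]%classic : set R) (q a)]).
apply => s.
apply: (@tychonoff A (fun _ => R) (fun _ => `[0, 1]%classic)) => a; exact: segment_compact.
Qed.

Definition phi (p : PX) : R :=
  \sum_s \sum_a (`|p s a| - p s a) + \sum_s `|\sum_a p s a - 1|.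

Lemma phi_cont : continuous phi.
Proof.
apply: contD.
  apply: (@sum_cont R) => s; apply: (@sum_cont R) => a.
  apply: contB; last exact: eval_cont.
  apply: (@cont_comp _ _ (fun p : PX => p s a)); first exact: eval_cont.
  exact: norm_continuous.
apply: (@sum_cont R) => s.
apply: (@cont_comp _ _ (fun p : PX => \sum_a p s a - 1)); last exact: norm_continuous.
apply: contB; last exact: cont_cst.
by apply: (@sum_cont R) => a; exact: eval_cont.
Qed.

Lemma Pol_phi : Pol = phi @^-1` [set x | x <= 0].
Proof.
rewrite /Pol /phi; apply/seteqP; split => p /=.
  move=> Hp; rewrite le_eqVlt; apply/orP; left; apply/eqP.
  rewrite big1 ?add0r; last first.
    move=> s _; rewrite big1 // => a _.
    by have [H _] := Hp s; rewrite ger0_norm ?subrr.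
  by rewrite big1 // => s _; have [_ ->] := Hp s; rewrite subrr normr0.
move=> H.
have Ht1 : forall s a, 0 <= `|p s a| - p s a.
  by move=> s a; rewrite subr_ge0 ler_norm.
have Ht2 : forall s, 0 <= `|\sum_a p s a - 1| by [].
have H1 : 0 <= \sum_s \sum_a (`|p s a| - p s a).
  by apply: sumr_ge0 => s _; apply: sumr_ge0.
have H2 : 0 <= \sum_s `|\sum_a p s a - 1| by apply: sumr_ge0.
have E1 : \sum_s \sum_a (`|p s a| - p s a) = 0.
  apply/eqP; rewrite eq_le H1 andbT; apply: le_trans H; by rewrite lerDl.
have E2 : \sum_s `|\sum_a p s a - 1| = 0.
  apply/eqP; rewrite eq_le H2 andbT; apply: le_trans H; by rewrite lerDr.
move=> s; split.
  move=> a.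
  move/eqP: E1; rewrite psumr_eq0; last by move=> i _; apply: sumr_ge0.
  move/allP/(_ s (mem_index_enum _)) => /=.
  rewrite psumr_eq0; last by move=> i _.
  move/allP/(_ a (mem_index_enum _)) => /=.
  by rewrite subr_eq0 => /eqP <-.
move/eqP: E2; rewrite psumr_eq0 //.
move/allP/(_ s (mem_index_enum _)) => /=.
by rewrite normr_eq0 subr_eq0 => /eqP.
Qed.

Lemma compact_Pol : compact Pol.
Proof.
apply: (subclosed_compact _ compact_box).
  rewrite Pol_phi; apply: closed_comp; last exact: closed_le.
  by move=> x _; exact: phi_cont.
move=> p Hp s a; rewrite /= in_itv /=; exact: pol_le1.
Qed.
End Topo.
Section MDP.
Variables (R : realType) (S A : finType) (P : S -> A -> S -> R) (gamma : R) (rho : S -> R).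
Hypotheses (HP : is_kernel P) (g0 : 0 <= gamma) (g1 : gamma < 1) (Hrho : is_distr rho).

Lemma sl_prop (p : S -> A -> R) : is_policy p -> forall t,
  (forall s, 0 <= state_law P p rho t s) /\ \sum_s state_law P p rho t s = 1.
Proof.
move=> Hp; elim=> [|t [IH0 IH1]] /=; first exact: Hrho.
split.
  move=> s'; apply: sumr_ge0 => s _; apply: sumr_ge0 => a _.
  apply: mulr_ge0; [apply: mulr_ge0 => //; exact: (Hp s).1 | exact: (HP s a).1].
rewrite exchange_big /=.
rewrite -[RHS]IH1; apply: eq_bigr => s _.
rewrite exchange_big /=.
transitivity (\sum_a state_law P p rho t s * p s a).
  by apply: eq_bigr => a _; rewrite -mulr_sumr (HP s a).2 mulr1.
by rewrite -mulr_sumr (Hp s).2 mulr1.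
Qed.

Lemma sl_01 (p : S -> A -> R) t s : is_policy p -> 0 <= state_law P p rho t s <= 1.
Proof.
move=> Hp; have [H0 H1] := sl_prop Hp t.
by rewrite H0 /= -H1 (bigD1 s) //= lerDl sumr_ge0.
Qed.

Lemma sl_cont t s : continuous (fun p : PX R S A => state_law P p rho t s).
Proof.
elim: t s => [|t IH] s /=; first exact: cont_cst.
apply: (@sum_cont R) => s0; apply: (@sum_cont R) => a.
apply: contM; last exact: cont_cst.
apply: contM; [exact: IH | exact: eval_cont].
Qed.

Definition term (f : PX R S A -> S -> A -> R) (t : nat) (p : PX R S A) : R :=
  gamma ^+ t * \sum_s \sum_a state_law P p rho t s * p s a * f p s a.

Lemma term_cont f : (forall s a, continuous (fun p : PX R S A => p s a * f p s a)) ->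
  forall t, continuous (term f t).
Proof.
move=> Hf t; rewrite /term.
apply: contM; first exact: cont_cst.
apply: (@sum_cont R) => s; apply: (@sum_cont R) => a.
have -> : (fun p : PX R S A => state_law P p rho t s * p s a * f p s a) =
  (fun p : PX R S A => state_law P p rho t s * (p s a * f p s a)).
  by apply/funext => p; rewrite mulrA.
apply: contM; [exact: sl_cont | exact: Hf].
Qed.

Lemma term_bound f (C : S -> A -> R) :
  (forall s a (p : PX R S A), is_policy p -> `|p s a * f p s a| <= C s a) ->
  forall p : PX R S A, is_policy p -> forall t,
  `|term f t p| <= (\sum_s \sum_a C s a) * gamma ^+ t.
Proof.
move=> HC p Hp t; rewrite /term normrM mulrC (ger0_norm (exprn_ge0 _ g0)).
apply: ler_wpM2r; first exact: exprn_ge0.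
apply: le_trans; first exact: ler_norm_sum.
apply: ler_sum => s _.
apply: le_trans; first exact: ler_norm_sum.
apply: ler_sum => a _.
rewrite -mulrA normrM.
have /andP [s0 s1] := sl_01 t s Hp.
rewrite (ger0_norm s0).
apply: le_trans (HC s a p Hp).
rewrite ler_piMl //.
Qed.

Definition ds f (p : PX R S A) := limn (series (fun t => term f t p)).

Section DS.
Variables (f : PX R S A -> S -> A -> R) (C : S -> A -> R).
Hypotheses (Hfc : forall s a, continuous (fun p : PX R S A => p s a * f p s a))
  (HC : forall s a (p : PX R S A), is_policy p -> `|p s a * f p s a| <= C s a)
  (C0 : forall s a, 0 <= C s a).
Let M := \sum_s \sum_a C s a.
Let M0 : 0 <= M. Proof. by apply: sumr_ge0 => s _; apply: sumr_ge0. Qed.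

Lemma ds_cont : {within (@Pol R S A), continuous (ds f)}.
Proof.
apply: (@lim_cont R gamma M) => //; first exact: term_cont.
by move=> p Hp t; apply: term_bound.
Qed.

Lemma ds_cvg p : is_policy p -> cvgn (series (fun t => term f t p)).
Proof. by move=> Hp; apply: (@ser_cvg R gamma M) => // t; apply: term_bound. Qed.

Lemma ds_bound p : is_policy p -> `|ds f p| <= M / (1 - gamma).
Proof. by move=> Hp; apply: (@ser_bound R gamma M) => // t; apply: term_bound. Qed.
End DS.

Lemma value_ds (p : PX R S A) r : value P gamma rho p r = ds (fun _ => r) p.
Proof. by []. Qed.

Lemma entropy_ds (p : PX R S A) : entropy P gamma rho p = ds (fun p s a => - ln (p s a)) p.
Proof. by []. Qed.

Lemma value_cont r : {within (@Pol R S A), continuous (fun p => value P gamma rho p r)}.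
Proof.
apply: (ds_cont (C := fun s a => `|r s a|)).
- move=> s a; apply: contM; [exact: eval_cont | exact: cont_cst].
- move=> s a p Hp; rewrite normrM ler_piMl //.
  by have /andP [H0 H1] := pol_le1 s a Hp; rewrite ger0_norm.
- by [].
Qed.

Lemma value_bound r : exists K, forall p : PX R S A, is_policy p -> `|value P gamma rho p r| <= K.
Proof.
eexists => p Hp; apply: (ds_bound (C := fun s a => `|r s a|)) => //.
move=> s a q Hq; rewrite normrM ler_piMl //.
by have /andP [H0 H1] := pol_le1 s a Hq; rewrite ger0_norm.
Qed.

Lemma ent_aux s a (p : PX R S A) : is_policy p -> `|p s a * - ln (p s a)| <= 1.
Proof.
move=> Hp; have /andP [H0 H1] := xlnx_bound (pol_le1 s a Hp).
by rewrite ger0_norm.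
Qed.

Lemma ent_cont_aux s a : continuous (fun p : PX R S A => p s a * - ln (p s a)).
Proof.
have -> : (fun p : PX R S A => p s a * - ln (p s a)) = (fun p : PX R S A => - (p s a * ln (p s a))).
  by apply/funext => p; rewrite mulrN.
apply: contN; apply: (cont_comp (f := fun p : PX R S A => p s a) (g := fun x => x * ln x)).
  exact: eval_cont.
exact: xlnx_cont.
Qed.

Lemma entropy_cont : {within (@Pol R S A), continuous (fun p => entropy P gamma rho p)}.
Proof.
apply: (ds_cont (f := fun p s a => - ln (p s a)) (C := fun _ _ => 1)) => //; [exact: ent_cont_aux | exact: ent_aux].
Qed.

Lemma entropy_bound : exists K, forall p : PX R S A, is_policy p -> `|entropy P gamma rho p| <= K.
Proof.
exists ((\sum_(s : S) \sum_(a : A) (1:R)) / (1 - gamma)) => p Hp.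
rewrite entropy_ds.
by apply: (ds_bound (f := fun p s a => - ln (p s a)) (C := fun _ _ => 1)) => //; exact: ent_aux.
Qed.

Lemma entropy_ge0 (p : PX R S A) : is_policy p -> 0 <= entropy P gamma rho p.
Proof.
move=> Hp; rewrite entropy_ds /ds.
apply: limr_ge.
  by apply: (ds_cvg (f := fun p s a => - ln (p s a)) (C := fun _ _ => 1)) => //; exact: ent_aux.
near=> n; rewrite /series /=; apply: sumr_ge0 => t _.
rewrite /term; apply: mulr_ge0; first exact: exprn_ge0.
apply: sumr_ge0 => s _; apply: sumr_ge0 => a _.
rewrite -mulrA; apply: mulr_ge0; first by have /andP [] := sl_01 t s Hp.
by have /andP [] := xlnx_bound (pol_le1 s a Hp).
Unshelve. all: by end_near.
Qed.

Lemma value_bound2 r (p : PX R S A) : is_policy p ->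
  `|value P gamma rho p r| <= (\sum_s \sum_a `|r s a|) / (1 - gamma).
Proof.
move=> Hp; apply: (ds_bound (f := fun _ => r) (C := fun s a => `|r s a|)) => //.
move=> s a q Hq; rewrite normrM ler_piMl //.
by have /andP [H0 H1] := pol_le1 s a Hq; rewrite ger0_norm.
Qed.

Lemma entropy_bound2 (p : PX R S A) : is_policy p ->
  `|entropy P gamma rho p| <= (\sum_(s : S) \sum_(a : A) (1:R)) / (1 - gamma).
Proof.
move=> Hp; rewrite entropy_ds.
by apply: (ds_bound (f := fun p s a => - ln (p s a)) (C := fun _ _ => 1)) => //; exact: ent_aux.
Qed.
End MDP.
Section Danskin.
Variables (R : realType) (T : topologicalType) (K : set T) (m : nat)
  (base : T -> R) (w : 'I_m -> T -> R) (L : T -> 'rV[R]_m -> R) (Bb Bw : R).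
Hypotheses (cK : compact K)
  (HL : forall p l, L p l = base p + \sum_j l 0 j * w j p)
  (Hbc : {within K, continuous base}) (Hwc : forall j, {within K, continuous (w j)})
  (Hbb : forall p, K p -> `|base p| <= Bb) (Hwb : forall j p, K p -> `|w j p| <= Bw).
Variables (lam : 'rV[R]_m) (pil : T).
Hypotheses (Kpil : K pil) (Hmax : forall p, K p -> L p lam <= L pil lam)
  (Huniq : forall p, K p -> (forall q, K q -> L q lam <= L p lam) -> p = pil).

Definition dd (l : 'rV[R]_m) := sup [set L p l | p in K].

Lemma dd_has_sup l : has_sup [set L p l | p in K].
Proof.
split; first by exists (L pil l), pil.
exists (Bb + \sum_j `|l 0 j| * Bw) => _ [p Kp <-].
rewrite HL; apply: lerD; first exact: (le_trans (ler_norm _) (Hbb Kp)).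
apply: le_trans (ler_norm _) _; apply: le_trans (ler_norm_sum _ _ _) _.
apply: ler_sum => j _; rewrite normrM; apply: ler_wpM2l => //; exact: Hwb.
Qed.

Lemma dd_ge l p : K p -> L p l <= dd l.
Proof. by move=> Kp; apply: sup_upper_bound (dd_has_sup l) _ _; exists p. Qed.

Lemma dd_lam : dd lam = L pil lam.
Proof.
apply/eqP; rewrite eq_le dd_ge // andbT.
apply: ge_sup; first by exists (L pil lam), pil.
by move=> _ [p Kp <-]; exact: Hmax.
Qed.

Lemma L_shift p h i : L p (h *: delta_mx 0 i + lam) = L p lam + h * w i p.
Proof.
rewrite !HL -addrA; congr (_ + _).
under eq_bigr do rewrite !mxE mulrDl.
rewrite big_split /= addrC; congr (_ + _).
rewrite (bigD1 i) //= eqxx mulr1 big1 ?addr0 //.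
by move=> j /negPf ji; rewrite ji mulr0 !mul0r.
Qed.

Lemma Lc : {within K, continuous (fun p => L p lam)}.
Proof.
have -> : (fun p => L p lam) = (fun p => base p + \sum_j lam 0 j * w j p).
  by apply/funext => p; rewrite HL.
apply: (contD (T := subspace K)); first exact: Hbc.
apply: (sum_cont (T := subspace K)) => j.
apply: (contM (T := subspace K)); [exact: cont_cst | exact: Hwc].
Qed.

Lemma key i eps : 0 < eps -> exists2 del, 0 < del &
  forall p, K p -> dd lam - del <= L p lam -> `|w i p - w i pil| < eps.
Proof.
move=> e0.
set U := [set p | eps <= `|w i p - w i pil|].
have [E|/set0P ne] := eqVneq (U `&` K) set0.
  exists 1 => // p Kp _; rewrite ltNge; apply/negP => Up.
  have : (U `&` K) p by [].
  by rewrite E.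
have cUK : compact (U `&` K).
  apply/(@compact_subspaceIP T K U).
  have cK' : compact (K : set (subspace K)).
    have := (@compact_subspaceIP T K setT).2; rewrite setTI; apply; exact: cK.
  apply: (subclosed_compact _ cK'); last exact: subIsetr.
  apply: closedI; last exact: closed_subspaceT.
  have phic : continuous ((fun p => `|w i p - w i pil|) : subspace K -> R).
    apply: (cont_comp (T := subspace K) (f := fun p => w i p - w i pil)); last exact: norm_continuous.
    apply: (contB (T := subspace K)); [exact: Hwc | exact: cont_cst].
  rewrite (_ : U = (fun p => `|w i p - w i pil|) @^-1` [set x | eps <= x]) //.
  apply: (@preimage_closed (subspace K) R); [by move=> x _; exact: phic | exact: closed_ge].
have [ph Hph Hmaxph] := compact_EVT_max ne cUK (continuous_subspaceW (@subIsetr _ U K) Lc).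
move: Hph; rewrite inE => -[Uph Kph].
have lt : L ph lam < dd lam.
  rewrite dd_lam lt_neqAle Hmax // andbT; apply/eqP => Heq.
  have eph : ph = pil.
    by apply: Huniq => // q Kq; rewrite Heq; exact: Hmax.
  by move: Uph; rewrite /U /= eph subrr normr0 leNgt e0.
exists ((dd lam - L ph lam) / 2); first by rewrite divr_gt0 // subr_gt0.
move=> p Kp Hp; rewrite ltNge; apply/negP => Up.
have := Hmaxph p; rewrite inE => /(_ (conj Up Kp)) => H.
lra.
Qed.

Lemma dd_derive i : 'D_(delta_mx 0 i) dd lam = w i pil.
Proof.
rewrite /derive; apply: cvg_lim => //.
apply/cvgrPdist_le => eps e0.
have e2 : 0 < eps / 2 by rewrite divr_gt0.
have [del del0 Hdel] := key i e2.
set g := w i pil.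
have Bw0 : 0 <= Bw by apply: le_trans (Hwb i Kpil).
have gB : 0 < `|g| + Bw + 1 by rewrite ltr_wpDl // addr_ge0.
set rr := Num.min (Num.min 1 (eps / 2)) (del / (`|g| + Bw + 1)).
have rr0 : 0 < rr by rewrite !lt_min ltr01 e2 divr_gt0.
near=> h.
have hn0 : h != 0 by near: h; exact: nbhs_dnbhs_neq.
have hr : `|h| < rr by near: h; exact: dnbhs0_lt.
move: hr; rewrite !lt_min => /andP [/andP [h1 he] hd].
rewrite /= /shift.
set D := dd (h *: delta_mx 0 i + lam).
have Dlow : dd lam + h * g <= D by rewrite dd_lam -L_shift; exact: dd_ge.
have h2 : 0 < h ^+ 2 by rewrite exprn_even_gt0.
have [_ [q Kq <-] Hq] := sup_adherent h2 (dd_has_sup (h *: delta_mx 0 i + lam)).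
rewrite -/(dd _) -/D L_shift in Hq.
have Lq : L q lam <= dd lam by exact: dd_ge.
have F1 : `|h * (g - w i q)| <= `|h| * (`|g| + Bw).
  rewrite normrM ler_wpM2l // (le_trans (ler_normB _ _)) // lerD2l; exact: Hwb.
have F2 : h ^+ 2 <= `|h|.
  by rewrite -(real_normK (num_real h)) expr2 -[leRHS]mulr1 ler_wpM2l // ltW.
have F3 : `|h| * (`|g| + Bw) + `|h| <= del.
  have : `|h| * (`|g| + Bw + 1) <= del by move: hd; rewrite ltr_pdivlMr // mulrC => /ltW.
  by rewrite mulrDr mulr1.
have F1' := ler_norm (- (h * (g - w i q))).
rewrite normrN in F1'.
have close : dd lam - del <= L q lam.
  rewrite mulrBr in F1' F1; lra.
have Hc := Hdel q Kq close.
pose x : R := h^-1 * (D - dd lam).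
have -> : h^-1 *: (D - dd lam) = x by [].
have ax : D - dd lam = h * x by rewrite /x mulrA mulfV // mul1r.
have A1 : h * g <= h * x by rewrite -ax; lra.
have A2 : h * x < h * w i q + h * h by rewrite -ax; rewrite expr2 in Hq; lra.
have A2' : h * x < h * (w i q + h) by rewrite mulrDr.
move: Hc; rewrite ltr_norml -/g => /andP [c1 c2].
have E2 : eps / 2 + eps / 2 = eps by rewrite -splitr.
rewrite ler_norml.
case: (ltgtP h 0) => [hlt|hgt|h0]; last by rewrite h0 eqxx in hn0.
- rewrite ltr0_norm // in he.
  have B1 : x <= g by rewrite -(ler_nM2l hlt).
  have B2 : w i q + h < x by rewrite -(ltr_nM2l hlt).
  apply/andP; split; first lra.
  have T1 : g - x < (g - w i q) + - h by lra.
  have T2 : (g - w i q) + - h < eps / 2 + eps / 2 by apply: ltrD; lra.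
  by rewrite -E2; apply: ltW; exact: lt_trans T1 T2.
- rewrite gtr0_norm // in he.
  have B1 : g <= x by rewrite -(ler_pM2l hgt).
  have B2 : x < w i q + h by rewrite -(ltr_pM2l hgt).
  apply/andP; split; last lra.
  have T1 : (g - w i q) - h < g - x by lra.
  have T2 : - (eps / 2) - eps / 2 < (g - w i q) - h by apply: ltrB; lra.
  by rewrite -E2 opprD; apply: ltW; exact: lt_trans T2 T1.
Unshelve. all: by end_near.
Qed.
End Danskin.

Unset Implicit Arguments.
Set Strict Implicit.

Theorem lemma6 (R : realType) (S A : finType) (m : nat)
  (P : S -> A -> S -> R) (gamma : R) (rho : S -> R)
  (r0 : S -> A -> R) (r : 'I_m -> S -> A -> R) (c : 'rV[R]_m)
  (xi tau : R) (pi_xi pistar : S -> A -> R) (lam : 'rV[R]_m) :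
  is_kernel P -> 0 < gamma < 1 -> is_distr rho ->
  (forall s a, 0 < r0 s a) -> (forall i s a, 0 < r i s a) ->
  (* Slater condition *)
  0 < xi -> is_policy pi_xi ->
  (forall i, c 0 i + xi <= value P gamma rho pi_xi (r i)) ->
  let B := (\big[Num.max/0]_(p : S * A) r0 p.1 p.2 + ln (#|A|%:R : R))
           / ((1 - gamma) * xi) in
  let inLambda := fun l : 'rV[R]_m =>
    (forall i, 0 <= l 0 i) /\ \sum_i `|l 0 i| <= B in
  0 < tau ->
  (* unique maximizer of L_tau(., l) for every l in Lambda *)
  (forall l, inLambda l ->
     exists pil, is_policy pil /\
       (forall pi, is_policy pi ->
          lagr P gamma rho r0 r c tau pi l <= lagr P gamma rho r0 r c tau pil l) /\
       (forall pi', is_policy pi' ->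
          (forall pi, is_policy pi ->
             lagr P gamma rho r0 r c tau pi l <= lagr P gamma rho r0 r c tau pi' l) ->
          pi' = pil)) ->
  (* pistar is an optimal policy of the CMDP *)
  is_policy pistar ->
  (forall i, c 0 i <= value P gamma rho pistar (r i)) ->
  (forall pi, is_policy pi -> (forall i, c 0 i <= value P gamma rho pi (r i)) ->
     value P gamma rho pi r0 <= value P gamma rho pistar r0) ->
  inLambda lam ->
  forall pil : S -> A -> R, is_policy pil ->
  (forall pi, is_policy pi ->
     lagr P gamma rho r0 r c tau pi lam <= lagr P gamma rho r0 r c tau pil lam) ->
  let g := grad (dual P gamma rho r0 r c tau) lam in
  value P gamma rho pistar r0 - value P gamma rho pil r0
    <= \sum_(i < m) lam 0 i * g 0 i + tau * entropy P gamma rho pil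
  /\ norm2 (\row_i pos_part (c 0 i - value P gamma rho pil (r i)))
     = norm2 (\row_i pos_part (- g 0 i)).
Proof.
move=> HP /andP [g0' g1] Hrho _ _ _ _ _ B inLambda tau0 Hun Hps Hpsf _ Hlam pil Hpil Hmax g.
have g0 : 0 <= gamma := ltW g0'.
pose base (p : PX R S A) := value P gamma rho p r0 + tau * entropy P gamma rho p.
pose w (j : 'I_m) (p : PX R S A) := value P gamma rho p (r j) - c 0 j.
pose L (p : PX R S A) l := lagr P gamma rho r0 r c tau p l.
have HL : forall p l, L p l = base p + \sum_j l 0 j * w j p.
  by move=> p l; rewrite /L /lagr /base /w addrAC.
have Hbc : {within @Pol R S A, continuous base}.
  apply: (contD (T := subspace (@Pol R S A))); first exact: (value_cont HP g0 g1 Hrho).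
  apply: (contM (T := subspace (@Pol R S A))); first exact: cont_cst.
  exact: (entropy_cont HP g0 g1 Hrho).
have Hwc : forall j, {within @Pol R S A, continuous (w j)}.
  move=> j; apply: (contB (T := subspace (@Pol R S A))); last exact: cont_cst.
  exact: (value_cont HP g0 g1 Hrho).
pose Bb := (\sum_s \sum_a `|r0 s a|) / (1 - gamma)
  + `|tau| * ((\sum_(s : S) \sum_(a : A) (1:R)) / (1 - gamma)).
have Hbb : forall p, @Pol R S A p -> `|base p| <= Bb.
  move=> p Hp; apply: le_trans (ler_normD _ _) _; apply: lerD.
    exact: (value_bound2 HP g0 g1 Hrho).
  rewrite normrM; apply: ler_wpM2l => //; exact: (entropy_bound2 HP g0 g1 Hrho).
pose Bw := \sum_j ((\sum_s \sum_a `|r j s a|) / (1 - gamma) + `|c 0 j|).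
have Hwb : forall j p, @Pol R S A p -> `|w j p| <= Bw.
  move=> j p Hp; rewrite /Bw (bigD1 j) //=.
  apply: le_trans (_ : _ <= (\sum_s \sum_a `|r j s a|) / (1 - gamma) + `|c 0 j|) _.
    apply: le_trans (ler_normB _ _) _; apply: lerD => //.
    exact: (value_bound2 HP g0 g1 Hrho).
  rewrite lerDl; apply: sumr_ge0 => k _; apply: addr_ge0 => //.
  apply: divr_ge0; last by rewrite subr_ge0 ltW.
  by apply: sumr_ge0 => s _; apply: sumr_ge0.
have [pil0 [Hpil0 [Hmax0 Hun0]]] := Hun lam Hlam.
have epil : pil = pil0 by apply: Hun0.
have Huniq : forall p : PX R S A, @Pol R S A p ->
    (forall q, @Pol R S A q -> L q lam <= L p lam) -> p = pil.
  by move=> p Hp Hq; rewrite epil; apply: Hun0.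
have Hdual : dual P gamma rho r0 r c tau = dd (@Pol R S A) L by [].
have Hg : forall i, g 0 i = w i pil.
  move=> i; rewrite /g /grad mxE Hdual.
  exact: (dd_derive (@compact_Pol R S A) HL Hbc Hwc Hbb Hwb Hpil Hmax Huniq).
split.
  under eq_bigr do rewrite Hg.
  have H1 := Hmax pistar Hps.
  have H2 : 0 <= \sum_j lam 0 j * (value P gamma rho pistar (r j) - c 0 j).
    apply: sumr_ge0 => j _; apply: mulr_ge0; first exact: (Hlam.1 j).
    by rewrite subr_ge0.
  have H3 : 0 <= tau * entropy P gamma rho pistar.
    by apply: mulr_ge0; [exact: ltW | exact: (entropy_ge0 HP g0 g1 Hrho)].
  move: H1; rewrite /lagr /w => H1.
  lra.
congr norm2; apply/matrixP => a b; by rewrite [in RHS]mxE Hg [in LHS]mxE /w opprB.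
Qed.
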